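(* Let $\nu=(\nu_x,\nu_y,\nu_t)\in\mathbb{S}^{2n}$ with $\nu_t=0$, let $d\in\mathbb{R}$ and $\Pi^+_{\nu,d}=\{\xi\in\mathbb{R}^{2n+1}:\langle\xi,\nu\rangle>d\}$. Then for every $u\in C_0^\infty(\Pi^+_{\nu,d})$, \[ \int_{\Pi^+_{\nu,d}}|\nabla_{\mathbb{H}^n}u|^2\,d\xi\ge\frac14\int_{\Pi^+_{\nu,d}}\frac{|u|^2}{\operatorname{dist}(\xi,\partial\Pi^+_{\nu,d})^2}\,d\xi . \]
   Context: $\mathbb{H}^n$ is $\mathbb{R}^{2n+1}$ with points $\xi=(x,y,t)$, $x,y\in\mathbb{R}^n$, $t\in\mathbb{R}$; correspondingly $\nu=(\nu_x,\nu_y,\nu_t)$ with $\nu_x,\nu_y\in\mathbb{R}^n$, $\nu_t\in\mathbb{R}$. For $1\le i\le n$, $X_i=\partial_{x_i}+2y_i\partial_t$, $Y_i=\partial_{y_i}-2x_i\partial_t$; $\nabla_{\mathbb{H}^n}u=(X_1u,\dots,X_nu,Y_1u,\dots,Y_nu)$ and $|\nabla_{\mathbb{H}^n}u|^2=\sum_i(|X_iu|^2+|Y_iu|^2)$. $\langle\cdot,\cdot\rangle$ is the Euclidean inner product, $\mathbb{S}^{2n}$ the Euclidean unit sphere in $\mathbb{R}^{2n+1}$, $\operatorname{dist}$ the Euclidean distance. Functions are real-valued. *)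

(* Defs.v *)
(* classical reals. Points of R^m are encoded as functions
   nat -> R whose coordinates of index >= m vanish. *)
From Stdlib Require Import Reals Lra.
Open Scope R_scope.

Fixpoint fsum (k : nat) (f : nat -> R) : R :=
  match k with O => 0 | S k' => fsum k' f + f k' end.

Definition pt (m : nat) (p : nat -> R) : Prop := forall i, (m <= i)%nat -> p i = 0.

Definition upd (p : nat -> R) (i : nat) (v : R) : nat -> R :=
  fun j => if Nat.eqb j i then v else p j.

Definition inner (m : nat) (p q : nat -> R) : R := fsum m (fun i => p i * q i).

Definition eucl_dist (m : nat) (p q : nat -> R) : R :=
  sqrt (fsum m (fun i => (p i - q i) ^ 2)).

Definition cont (m : nat) (f : (nat -> R) -> R) : Prop :=
  forall p, pt m p -> forall eps, 0 < eps -> exists del, 0 < del /\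
    forall q, pt m q -> (forall i, (i < m)%nat -> Rabs (q i - p i) < del) ->
      Rabs (f q - f p) < eps.

Definition is_partial (m : nat) (f : (nat -> R) -> R) (i : nat)
  (df : (nat -> R) -> R) : Prop :=
  forall p, pt m p -> derivable_pt_lim (fun s => f (upd p i s)) (p i) (df p).

CoInductive smooth (m : nat) (f : (nat -> R) -> R) : Prop :=
  smooth_intro : cont m f ->
    (forall i, (i < m)%nat -> exists df, is_partial m f i df /\ smooth m df) ->
    smooth m f.

(* Riemann sums over the grid (Z/N)^m ∩ [-N,N]^m *)
Fixpoint gridsum (m N : nat) (g : (nat -> R) -> R) : R :=
  match m with
  | O => g (fun _ => 0)
  | S m' => fsum (2 * N * N + 1) (fun j =>
        gridsum m' N (fun p => g (upd p m' ((INR j - INR (N * N)) / INR N))))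
  end.

Definition riemann_sum (m N : nat) (g : (nat -> R) -> R) : R :=
  gridsum m N g / (INR N) ^ m.

(* I is the integral over R^m of g (g continuous, compactly supported) *)
Definition integral_is (m : nat) (g : (nat -> R) -> R) (I : R) : Prop :=
  Un_cv (fun N => riemann_sum m N g) I.

Definition is_inf (E : R -> Prop) (r : R) : Prop :=
  (forall x, E x -> r <= x) /\ (forall r', (forall x, E x -> r' <= x) -> r' <= r).

(* Heisenberg group H^n on R^(2n+1): x_i = index i, y_i = index n+i, t = index 2n *)
Definition Xfield (n : nat) (Du : nat -> (nat -> R) -> R) (i : nat) (p : nat -> R) : R :=
  Du i p + 2 * p (n + i)%nat * Du (2 * n)%nat p.
Definition Yfield (n : nat) (Du : nat -> (nat -> R) -> R) (i : nat) (p : nat -> R) : R :=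
  Du (n + i)%nat p - 2 * p i * Du (2 * n)%nat p.
Definition gradH2 (n : nat) (Du : nat -> (nat -> R) -> R) (p : nat -> R) : R :=
  fsum n (fun i => (Xfield n Du i p) ^ 2 + (Yfield n Du i p) ^ 2).

(* Main.v *)
Require Import Defs.
From Stdlib Require Import Reals Lra Lia Arith ZArith ClassicalDescription FunctionalExtensionality Classical.
Open Scope R_scope.

Lemma fsum_ext k f g : (forall i, (i < k)%nat -> f i = g i) -> fsum k f = fsum k g.
Proof. induction k; simpl; intros H; auto. rewrite IHk by (intros; apply H; lia). rewrite H by lia. auto. Qed.

Lemma fsum_plus k f g : fsum k (fun i => f i + g i) = fsum k f + fsum k g.
Proof. induction k; simpl; [lra|]. rewrite IHk; lra. Qed.

Lemma fsum_scal k c f : fsum k (fun i => c * f i) = c * fsum k f.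
Proof. induction k; simpl; [lra|]. rewrite IHk; lra. Qed.

Lemma fsum_minus k f g : fsum k (fun i => f i - g i) = fsum k f - fsum k g.
Proof. induction k; simpl; [lra|]. rewrite IHk; lra. Qed.

Lemma fsum_zero k : fsum k (fun _ => 0) = 0.
Proof. induction k; simpl; lra. Qed.

Lemma fsum_le k f g : (forall i, (i < k)%nat -> f i <= g i) -> fsum k f <= fsum k g.
Proof. induction k; simpl; intros H; [lra|]. assert (f k <= g k) by (apply H; lia).
  assert (fsum k f <= fsum k g) by (apply IHk; intros; apply H; lia). lra. Qed.

Lemma fsum_ge0 k f : (forall i, (i < k)%nat -> 0 <= f i) -> 0 <= fsum k f.
Proof. intros H. rewrite <- (fsum_zero k). apply fsum_le. auto. Qed.

Lemma fsum_abs k f : Rabs (fsum k f) <= fsum k (fun i => Rabs (f i)).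
Proof. induction k; simpl. rewrite Rabs_R0; lra.
  eapply Rle_trans. apply Rabs_triang. lra. Qed.

Lemma fsum_bound k f c : (forall i, (i < k)%nat -> f i <= c) -> fsum k f <= INR k * c.
Proof. induction k; intros H. simpl; lra. cbn [fsum]. rewrite S_INR.
  assert (f k <= c) by (apply H; lia). assert (fsum k f <= INR k * c) by (apply IHk; intros; apply H; lia). lra. Qed.

Lemma fsum_add a b f : fsum (a + b) f = fsum a f + fsum b (fun i => f (a + i)%nat).
Proof. induction b; simpl. rewrite Nat.add_0_r; lra. rewrite Nat.add_succ_r. simpl. rewrite IHb; lra. Qed.

Lemma fsum_term_le k f j : (forall i, (i < k)%nat -> 0 <= f i) -> (j < k)%nat -> f j <= fsum k f.
Proof. induction k; intros H Hj. lia. simpl. destruct (Nat.eq_dec j k). subst.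
  assert (0 <= fsum k f) by (apply fsum_ge0; intros; apply H; lia). lra.
  assert (f j <= fsum k f) by (apply IHk; [intros; apply H; lia| lia]). assert (0 <= f k) by (apply H; lia). lra. Qed.

Lemma fsum_shift M F : fsum M (fun j => F (S j)) = fsum M F + F M - F O.
Proof. induction M; simpl. lra. rewrite IHM. lra. Qed.

Lemma upd_same p i v : upd p i v i = v.
Proof. unfold upd. rewrite Nat.eqb_refl. auto. Qed.
Lemma upd_other p i v j : j <> i -> upd p i v j = p j.
Proof. intros. unfold upd. destruct (Nat.eqb_spec j i); auto; lia. Qed.
Lemma upd_upd p i a b : upd (upd p i a) i b = upd p i b.
Proof. apply functional_extensionality; intros j. unfold upd. destruct (Nat.eqb j i); auto. Qed.
Lemma upd_comm p i j a b : i <> j -> upd (upd p i a) j b = upd (upd p j b) i a.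
Proof. intros H. apply functional_extensionality; intros k. unfold upd.
  destruct (Nat.eqb_spec k j); destruct (Nat.eqb_spec k i); auto; lia. Qed.
Lemma upd_self p i : upd p i (p i) = p.
Proof. apply functional_extensionality; intros j. unfold upd. destruct (Nat.eqb_spec j i); subst; auto. Qed.
Lemma pt_upd m p i v : pt m p -> (i < m)%nat -> pt m (upd p i v).
Proof. intros H Hi j Hj. rewrite upd_other by lia. auto. Qed.
Lemma pt_upd_S m p v : pt m p -> pt (S m) (upd p m v).
Proof. intros H j Hj. rewrite upd_other by lia. apply H; lia. Qed.

Lemma inner_upd m p v k y : (k < m)%nat -> inner m (upd p k y) v = inner m p v + (y - p k) * v k.
Proof. unfold inner. induction m; intros Hk. lia. simpl. destruct (Nat.eq_dec k m).
  - subst. rewrite upd_same. rewrite (fsum_ext m (fun i => upd p m y i * v i) (fun i => p i * v i)).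
    lra. intros; rewrite upd_other by lia; auto.
  - rewrite IHm by lia. rewrite upd_other by lia. lra. Qed.

Definition xg (N j : nat) : R := (INR j - INR (N * N)) / INR N.

Lemma gridsum_S m N g : gridsum (S m) N g = fsum (2 * N * N + 1) (fun j => gridsum m N (fun p => g (upd p m (xg N j)))).
Proof. reflexivity. Qed.

Lemma pt0 : pt 0 (fun _ => 0).
Proof. intros i _; auto. Qed.

Lemma gridsum_ext m N g h : (forall p, pt m p -> g p = h p) -> gridsum m N g = gridsum m N h.
Proof. revert g h; induction m; intros g h H. simpl. apply H, pt0.
  rewrite !gridsum_S. apply fsum_ext. intros j _. apply IHm. intros p Hp. apply H. apply pt_upd_S; auto. Qed.

Lemma gridsum_plus m N g h : gridsum m N (fun p => g p + h p) = gridsum m N g + gridsum m N h.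
Proof. revert g h; induction m; intros g h. reflexivity.
  rewrite !gridsum_S. rewrite <- fsum_plus. apply fsum_ext. intros j _. apply IHm. Qed.

Lemma gridsum_scal m N c g : gridsum m N (fun p => c * g p) = c * gridsum m N g.
Proof. revert g; induction m; intros g. reflexivity.
  rewrite !gridsum_S. rewrite <- fsum_scal. apply fsum_ext. intros j _. apply IHm. Qed.

Lemma gridsum_minus m N g h : gridsum m N (fun p => g p - h p) = gridsum m N g - gridsum m N h.
Proof. replace (gridsum m N g - gridsum m N h) with (gridsum m N g + (-1) * gridsum m N h) by ring.
  rewrite <- gridsum_scal, <- gridsum_plus. apply gridsum_ext. intros; ring. Qed.

Lemma gridsum_le m N g h : (forall p, pt m p -> g p <= h p) -> gridsum m N g <= gridsum m N h.
Proof. revert g h; induction m; intros g h H. simpl. apply H, pt0.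
  rewrite !gridsum_S. apply fsum_le. intros j _. apply IHm. intros p Hp. apply H. apply pt_upd_S; auto. Qed.

Lemma gridsum_fsum m N K f : gridsum m N (fun p => fsum K (fun k => f k p)) = fsum K (fun k => gridsum m N (f k)).
Proof. induction K. simpl. replace (fun _ : nat -> R => 0) with (fun p : nat -> R => 0 * 0) by (apply functional_extensionality; intros; ring).
  rewrite gridsum_scal. ring. simpl. rewrite gridsum_plus. rewrite IHK. auto. Qed.

Lemma gridsum_zero m N g : (forall p, pt m p -> g p = 0) -> gridsum m N g = 0.
Proof. intros H. rewrite (gridsum_ext m N g (fun p => 0 * 0)). rewrite gridsum_scal; ring. intros; rewrite H; auto; ring. Qed.

Lemma xg_S N j : (0 < N)%nat -> xg N j + / INR N = xg N (S j).
Proof. intros H. unfold xg. rewrite S_INR. assert (0 < INR N) by (apply lt_0_INR; auto). field. lra. Qed.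

Lemma xg_0 N : (0 < N)%nat -> xg N 0 = - INR N.
Proof. intros H. unfold xg. rewrite mult_INR. assert (0 < INR N) by (apply lt_0_INR; auto). simpl. field. lra. Qed.

Lemma xg_M N : (0 < N)%nat -> xg N (2 * N * N + 1) = INR N + / INR N.
Proof. intros H. unfold xg. rewrite plus_INR, !mult_INR. assert (0 < INR N) by (apply lt_0_INR; auto). simpl. field. lra. Qed.

Lemma gridsum_shift m N K g k : (0 < N)%nat -> K < INR N -> (k < m)%nat ->
  (forall p, pt m p -> K < Rabs (p k) -> g p = 0) ->
  gridsum m N (fun p => g (upd p k (p k + / INR N))) = gridsum m N g.
Proof. intros HN HK. assert (0 < INR N) by (apply lt_0_INR; auto).
  revert g k; induction m; intros g k Hk Hg. lia.
  rewrite !gridsum_S. destruct (Nat.eq_dec k m).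
  - subst k. set (F := fun j => gridsum m N (fun p => g (upd p m (xg N j)))).
    transitivity (fsum (2 * N * N + 1) (fun j => F (S j))).
    + apply fsum_ext. intros j _. unfold F. apply gridsum_ext. intros p Hp.
      rewrite upd_same, upd_upd, xg_S; auto.
    + rewrite fsum_shift. assert (F O = 0 /\ F (2 * N * N + 1)%nat = 0) as [A B].
      { split; unfold F; apply gridsum_zero; intros p Hp; apply Hg; try apply pt_upd_S; auto; rewrite upd_same.
        rewrite xg_0 by auto. rewrite Rabs_Ropp, Rabs_right; lra.
        rewrite xg_M by auto. assert (0 < / INR N) by (apply Rinv_0_lt_compat; lra). rewrite Rabs_right; lra. }
      rewrite A, B. ring.
  - apply fsum_ext. intros j _.
    assert (IH := IHm (fun p => g (upd p m (xg N j))) k ltac:(lia)).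
    rewrite <- IH. 2:{ intros p Hp Hpk; apply Hg; [apply pt_upd_S; auto| rewrite upd_other by lia; auto]. }
    apply gridsum_ext. intros p Hp. rewrite upd_other by lia. rewrite upd_comm by lia. auto. Qed.

Lemma abs_between x a : Rabs x <= a -> -a <= x <= a.
Proof. unfold Rabs; destruct Rcase_abs; lra. Qed.

Definition ind (N : nat) (L : R) (j : nat) : R := if Rle_dec (Rabs (xg N j)) L then 1 else 0.
Definition Cnt (N : nat) (L : R) : R := fsum (2 * N * N + 1) (ind N L).

Lemma count_gen a b M f : (forall j, f j = 0 \/ (f j = 1 /\ a <= INR j <= b)) ->
  fsum M f <= Rmax 0 (Rmin (INR M) (b + 1) - a).
Proof. intros H. induction M. simpl. unfold Rmax, Rmin; repeat destruct Rle_dec; lra.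
  cbn [fsum]. rewrite S_INR. destruct (H M) as [E|[E [E1 E2]]]; rewrite E;
  revert IHM; unfold Rmax, Rmin; repeat destruct Rle_dec; lra. Qed.

Lemma Cnt_bound N L : (0 < N)%nat -> 0 <= L -> Cnt N L <= 2 * L * INR N + 1.
Proof. intros HN HL. assert (0 < INR N) by (apply lt_0_INR; auto). unfold Cnt.
  eapply Rle_trans. apply (count_gen (INR (N*N) - L * INR N) (INR (N*N) + L * INR N)).
  - intros j. unfold ind. destruct Rle_dec as [r|r]; [right|left]; auto. split; auto.
    unfold xg in r. apply abs_between in r. destruct r as [r1 r2].
    apply (Rmult_le_compat_r (INR N)) in r1; [|lra]. apply (Rmult_le_compat_r (INR N)) in r2; [|lra].
    unfold Rdiv in *. rewrite Rmult_assoc, Rinv_l in r1, r2 by lra. lra.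
  - unfold Rmax, Rmin; repeat destruct Rle_dec; nra. Qed.

Lemma Cnt_ge0 N L : 0 <= Cnt N L.
Proof. apply fsum_ge0. intros. unfold ind. destruct Rle_dec; lra. Qed.

Lemma gridsum_count m N L g Bd : 0 <= Bd -> (forall p, pt m p -> Rabs (g p) <= Bd) ->
  (forall p, pt m p -> g p <> 0 -> forall i, (i < m)%nat -> Rabs (p i) <= L) ->
  Rabs (gridsum m N g) <= Bd * Cnt N L ^ m.
Proof. revert g Bd; induction m; intros g Bd HB Hb Hs. simpl. rewrite Rmult_1_r. apply Hb, pt0.
  rewrite gridsum_S. eapply Rle_trans. apply fsum_abs.
  unfold Cnt. rewrite <- tech_pow_Rmult.
  replace (Bd * (fsum (2 * N * N + 1) (ind N L) * fsum (2 * N * N + 1) (ind N L) ^ m))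
     with (fsum (2 * N * N + 1) (fun j => (Bd * Cnt N L ^ m) * ind N L j)) by (rewrite fsum_scal; unfold Cnt; ring).
  apply fsum_le. intros j _. unfold ind. destruct Rle_dec as [r|r].
  - rewrite Rmult_1_r. apply IHm; auto. intros p Hp. apply Hb, pt_upd_S; auto.
    intros p Hp Hne i Hi. specialize (Hs _ (pt_upd_S _ _ _ Hp) Hne i ltac:(lia)). rewrite upd_other in Hs by lia. auto.
  - rewrite Rmult_0_r. replace 0 with (0 * Cnt N L ^ m) by ring. apply IHm. lra.
    + intros p Hp. destruct (Req_dec (g (upd p m (xg N j))) 0) as [E|E]. rewrite E, Rabs_R0; lra.
      exfalso. apply r. specialize (Hs _ (pt_upd_S _ _ _ Hp) E m ltac:(lia)). rewrite upd_same in Hs. auto.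
    + intros p Hp Hne i Hi. specialize (Hs _ (pt_upd_S _ _ _ Hp) Hne i ltac:(lia)). rewrite upd_other in Hs by lia. auto. Qed.

Lemma riemann_count m N L g Bd : (0 < N)%nat -> 0 <= L -> 0 <= Bd -> (forall p, pt m p -> Rabs (g p) <= Bd) ->
  (forall p, pt m p -> g p <> 0 -> forall i, (i < m)%nat -> Rabs (p i) <= L) ->
  Rabs (riemann_sum m N g) <= Bd * (2 * L + 1) ^ m.
Proof. intros HN HL HB Hb Hs. assert (0 < INR N) by (apply lt_0_INR; auto).
  assert (1 <= INR N) by (apply (le_INR 1); lia).
  unfold riemann_sum. unfold Rdiv. rewrite Rabs_mult. rewrite Rabs_inv. rewrite (Rabs_right (INR N ^ m)) by (apply Rle_ge, pow_le; lra).
  eapply Rle_trans. apply Rmult_le_compat_r. left; apply Rinv_0_lt_compat, pow_lt; lra.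
  apply (gridsum_count m N L g Bd); auto.
  rewrite Rmult_assoc. apply Rmult_le_compat_l; auto. rewrite <- pow_inv. rewrite <- Rpow_mult_distr.
  apply pow_incr. split. apply Rmult_le_pos. apply Cnt_ge0. left; apply Rinv_0_lt_compat; lra.
  apply (Rmult_le_reg_r (INR N)). lra. rewrite Rmult_assoc, Rinv_l, Rmult_1_r by lra.
  generalize (Cnt_bound N L HN HL). nra. Qed.

Definition near (m : nat) (p : nat -> R) (P : (nat -> R) -> Prop) : Prop :=
  exists del, 0 < del /\ forall q, pt m q -> (forall i, (i < m)%nat -> Rabs (q i - p i) < del) -> P q.

Definition contAt (m : nat) (f : (nat -> R) -> R) (p : nat -> R) : Prop :=
  forall eps, 0 < eps -> near m p (fun q => Rabs (f q - f p) < eps).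

Lemma near_and m p P Q : near m p P -> near m p Q -> near m p (fun q => P q /\ Q q).
Proof. intros [d1 [H1 P1]] [d2 [H2 P2]]. exists (Rmin d1 d2). split. apply Rmin_glb_lt; auto.
  intros q Hq Hd. split. apply P1; auto. intros i Hi. specialize (Hd i Hi). generalize (Rmin_l d1 d2); lra.
  apply P2; auto. intros i Hi. specialize (Hd i Hi). generalize (Rmin_r d1 d2); lra. Qed.

Lemma near_impl m p (P Q : (nat -> R) -> Prop) : (forall q, pt m q -> P q -> Q q) -> near m p P -> near m p Q.
Proof. intros H [d [Hd P1]]. exists d; split; auto. Qed.

Lemma contAt_ext m f g p : pt m p -> (forall q, pt m q -> f q = g q) -> contAt m f p -> contAt m g p.
Proof. intros Hp H Hc eps He. apply (near_impl m p (fun q => Rabs (f q - f p) < eps)); [|apply Hc; auto].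
  intros q Hq. rewrite !H; auto. Qed.

Lemma contAt_const m c p : contAt m (fun _ => c) p.
Proof. intros eps He. exists 1. split. lra. intros. rewrite Rminus_diag, Rabs_R0; auto. Qed.

Lemma contAt_plus m f g p : contAt m f p -> contAt m g p -> contAt m (fun q => f q + g q) p.
Proof. intros Hf Hg eps He. eapply near_impl. 2: apply near_and; [apply (Hf (eps/2)) | apply (Hg (eps/2))]; lra.
  intros q _ [A B]. replace (f q + g q - (f p + g p)) with ((f q - f p) + (g q - g p)) by ring.
  eapply Rle_lt_trans. apply Rabs_triang. lra. Qed.

Lemma contAt_opp m f p : contAt m f p -> contAt m (fun q => - f q) p.
Proof. intros Hf eps He. eapply near_impl. 2: apply (Hf eps He). intros q _ A.
  replace (- f q - - f p) with (- (f q - f p)) by ring. rewrite Rabs_Ropp; auto. Qed.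

Lemma contAt_minus m f g p : contAt m f p -> contAt m g p -> contAt m (fun q => f q - g q) p.
Proof. intros Hf Hg. unfold Rminus. apply contAt_plus; auto. apply contAt_opp; auto. Qed.

Lemma contAt_mult m f g p : contAt m f p -> contAt m g p -> contAt m (fun q => f q * g q) p.
Proof. intros Hf Hg eps He.
  set (a := Rabs (f p)). set (b := Rabs (g p)).
  assert (Ha : 0 <= a) by apply Rabs_pos. assert (Hb : 0 <= b) by apply Rabs_pos.
  eapply near_impl. 2: apply near_and; [apply near_and; [apply (Hf 1) | apply (Hf (eps / (2 * (b + 1))))] | apply (Hg (eps / (2 * (a + 1))))].
  2,3,4: first [lra | apply Rdiv_lt_0_compat; lra].
  intros q _ [[A1 A2] B].
  replace (f q * g q - f p * g p) with (f q * (g q - g p) + g p * (f q - f p)) by ring.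
  eapply Rle_lt_trans. apply Rabs_triang. rewrite !Rabs_mult.
  assert (Rabs (f q) <= a + 1). { replace (f q) with ((f q - f p) + f p) by ring.
    eapply Rle_trans. apply Rabs_triang. unfold a; lra. }
  assert (Rabs (f q) * Rabs (g q - g p) <= (a + 1) * (eps / (2 * (a + 1)))).
  { apply Rmult_le_compat; try apply Rabs_pos; lra. }
  assert (Rabs (g p) * Rabs (f q - f p) <= b * (eps / (2 * (b + 1)))).
  { apply Rmult_le_compat_l; auto. lra. }
  assert ((a + 1) * (eps / (2 * (a + 1))) = eps / 2) by (field; lra).
  assert (b * (eps / (2 * (b + 1))) < eps / 2).
  { assert (b * (eps / (2 * (b + 1))) = (eps / 2) * (b / (b + 1))) by (field; lra).
    assert (b / (b + 1) < 1). { apply (Rmult_lt_reg_r (b + 1)). lra. unfold Rdiv. rewrite Rmult_assoc, Rinv_l by lra. lra. }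
    assert (0 < eps / 2) by lra. nra. }
  unfold b in *. lra. Qed.

Lemma contAt_inv m f p : f p <> 0 -> contAt m f p -> contAt m (fun q => / f q) p.
Proof. intros Hne Hf eps He. set (a := Rabs (f p)). assert (Ha : 0 < a) by (apply Rabs_pos_lt; auto).
  eapply near_impl. 2: apply near_and; [apply (Hf (a / 2)) | apply (Hf (eps * a * a / 2))].
  2,3: try (apply Rdiv_lt_0_compat; [|lra]); try lra; repeat apply Rmult_lt_0_compat; lra.
  intros q _ [A B].
  assert (Hq : a / 2 < Rabs (f q)). { replace (f p) with (f p - f q + f q) in a by ring.
    assert (Rabs (f p) <= Rabs (f p - f q) + Rabs (f q)). { replace (f p) with ((f p - f q) + f q) at 1 by ring. apply Rabs_triang. }
    rewrite <- Rabs_Ropp in A. replace (- (f q - f p)) with (f p - f q) in A by ring. unfold a in *. lra. }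
  assert (fq0 : f q <> 0). { intro E. rewrite E, Rabs_R0 in Hq. lra. }
  replace (/ f q - / f p) with ((f p - f q) * / (f q * f p)) by (field; auto).
  rewrite Rabs_mult, Rabs_inv, Rabs_mult. fold a.
  rewrite <- Rabs_Ropp. replace (- (f p - f q)) with (f q - f p) by ring.
  apply (Rmult_lt_reg_r (Rabs (f q) * a)). apply Rmult_lt_0_compat; lra.
  rewrite Rmult_assoc, Rinv_l, Rmult_1_r by (apply Rgt_not_eq; apply Rmult_lt_0_compat; lra).
  assert (eps * (a / 2 * a) <= eps * (Rabs (f q) * a)). { apply Rmult_le_compat_l. lra. apply Rmult_le_compat_r; lra. }
  assert (eps * a * a / 2 = eps * (a / 2 * a)) by field. lra. Qed.

Definition Good (m : nat) (f : (nat -> R) -> R) (eps : R) (B : (nat -> R) * (nat -> R)) : Prop :=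
  exists del, 0 < del /\ forall p q, pt m p -> pt m q -> (forall i, (i < m)%nat -> fst B i <= p i <= snd B i) ->
    (forall i, (i < m)%nat -> Rabs (q i - p i) < del) -> Rabs (f q - f p) < eps.

Definition mid (B : (nat -> R) * (nat -> R)) k := (fst B k + snd B k) / 2.

Definition splitB m f eps k (B : (nat -> R) * (nat -> R)) : (nat -> R) * (nat -> R) :=
  if excluded_middle_informative (Good m f eps (fst B, upd (snd B) k (mid B k)))
  then (upd (fst B) k (mid B k), snd B) else (fst B, upd (snd B) k (mid B k)).

Lemma Good_split m f eps k B : Good m f eps (fst B, upd (snd B) k (mid B k)) ->
  Good m f eps (upd (fst B) k (mid B k), snd B) -> Good m f eps B.
Proof. intros [d1 [H1 G1]] [d2 [H2 G2]]. exists (Rmin d1 d2). split. apply Rmin_glb_lt; auto.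
  intros p q Hp Hq Hb Hd. destruct (Rle_dec (p k) (mid B k)).
  - apply G1; auto. intros i Hi. simpl. destruct (Nat.eq_dec i k). subst. rewrite upd_same. specialize (Hb k Hi); lra.
    rewrite upd_other by auto. auto.
    intros i Hi. specialize (Hd i Hi). generalize (Rmin_l d1 d2); lra.
  - apply G2; auto. intros i Hi. simpl. destruct (Nat.eq_dec i k). subst. rewrite upd_same. specialize (Hb k Hi); lra.
    rewrite upd_other by auto. auto.
    intros i Hi. specialize (Hd i Hi). generalize (Rmin_r d1 d2); lra. Qed.

Lemma splitB_bad m f eps k B : ~ Good m f eps B -> ~ Good m f eps (splitB m f eps k B).
Proof. intros H. unfold splitB. destruct excluded_middle_informative as [g|g]; auto.
  intro G. apply H. apply (Good_split m f eps k); auto. Qed.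

Lemma splitB_prop m f eps k B i :
  (i <> k -> fst (splitB m f eps k B) i = fst B i /\ snd (splitB m f eps k B) i = snd B i) /\
  (i = k -> fst B i <= snd B i -> fst B i <= fst (splitB m f eps k B) i /\ snd (splitB m f eps k B) i <= snd B i /\
     snd (splitB m f eps k B) i - fst (splitB m f eps k B) i = (snd B i - fst B i) / 2).
Proof. unfold splitB, mid. destruct excluded_middle_informative; simpl; split; intros.
  rewrite !upd_other by auto. auto. subst. rewrite upd_same. lra.
  rewrite !upd_other by auto. auto. subst. rewrite upd_same. lra.
Qed.

Fixpoint splitseq m f eps k B := match k with O => B | S k' => splitB m f eps k' (splitseq m f eps k' B) end.

Lemma splitseq_prop m f eps k B i : fst B i <= snd B i ->
  fst B i <= fst (splitseq m f eps k B) i /\ snd (splitseq m f eps k B) i <= snd B i /\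
  ((i < k)%nat -> snd (splitseq m f eps k B) i - fst (splitseq m f eps k B) i = (snd B i - fst B i) / 2) /\
  ((k <= i)%nat -> snd (splitseq m f eps k B) i - fst (splitseq m f eps k B) i = snd B i - fst B i).
Proof. intros H0. induction k; simpl. split; [lra|split;[lra|split;[lia|auto]]].
  destruct IHk as [A [B1 [C D]]]. destruct (splitB_prop m f eps k (splitseq m f eps k B) i) as [E F].
  destruct (Nat.eq_dec i k).
  - subst i. assert (W := D (le_n k)). destruct (F eq_refl) as [F1 [F2 F3]]. lra.
    split. lra. split. lra. split. intros _. lra. intros; lia.
  - destruct (E n) as [E1 E2]. rewrite E1, E2. split; auto. split; auto. split; intros; [apply C | apply D]; lia. Qed.

Lemma splitseq_bad m f eps k B : ~ Good m f eps B -> ~ Good m f eps (splitseq m f eps k B).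
Proof. induction k; simpl; auto. intros H. apply splitB_bad. auto. Qed.

Fixpoint boxes m f eps j B := match j with O => B | S j' => splitseq m f eps m (boxes m f eps j' B) end.

Lemma boxes_prop m f eps B i j : (i < m)%nat -> fst B i <= snd B i ->
  snd (boxes m f eps j B) i - fst (boxes m f eps j B) i = (snd B i - fst B i) * (/2) ^ j /\
  fst (boxes m f eps j B) i <= fst (boxes m f eps (S j) B) i /\ snd (boxes m f eps (S j) B) i <= snd (boxes m f eps j B) i.
Proof. intros Hi H0. induction j.
  - simpl. split. ring. destruct (splitseq_prop m f eps m B i H0) as [A [B1 _]]. auto.
  - destruct IHj as [W [M1 M2]].
    assert (Hle : fst (boxes m f eps (S j) B) i <= snd (boxes m f eps (S j) B) i).
    { simpl. destruct (splitseq_prop m f eps m (boxes m f eps j B) i) as [A [B1 [C _]]].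
      assert (0 <= (snd B i - fst B i) * (/ 2) ^ j) by (apply Rmult_le_pos; [lra| apply pow_le; lra]). lra.
      specialize (C Hi). lra. }
    destruct (splitseq_prop m f eps m (boxes m f eps (S j) B) i Hle) as [A [B1 [C _]]].
    split. 2: split; simpl in *; auto.
    simpl. destruct (splitseq_prop m f eps m (boxes m f eps j B) i) as [A' [B' [C' _]]].
    assert (0 <= (snd B i - fst B i) * (/ 2) ^ j) by (apply Rmult_le_pos; [lra| apply pow_le; lra]). lra.
    rewrite (C' Hi). rewrite W. field. Qed.

Lemma boxes_bad m f eps B j : ~ Good m f eps B -> ~ Good m f eps (boxes m f eps j B).
Proof. induction j; simpl; auto. intros H. apply splitseq_bad. auto. Qed.

Lemma boxes_mono m f eps B i j j' : (i < m)%nat -> fst B i <= snd B i -> (j <= j')%nat ->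
  fst (boxes m f eps j B) i <= fst (boxes m f eps j' B) i /\ snd (boxes m f eps j' B) i <= snd (boxes m f eps j B) i.
Proof. intros Hi H0 Hj. induction Hj. lra. destruct (boxes_prop m f eps B i m0 Hi H0) as [_ [A B1]]. lra. Qed.

Lemma boxes_le m f eps B i j j' : (i < m)%nat -> fst B i <= snd B i ->
  fst (boxes m f eps j B) i <= snd (boxes m f eps j' B) i.
Proof. intros Hi H0. destruct (boxes_mono m f eps B i j (max j j') Hi H0 ltac:(lia)) as [A _].
  destruct (boxes_mono m f eps B i j' (max j j') Hi H0 ltac:(lia)) as [_ C].
  destruct (boxes_prop m f eps B i (max j j') Hi H0) as [W _].
  assert (0 <= (snd B i - fst B i) * (/ 2) ^ (max j j')) by (apply Rmult_le_pos; [lra| apply pow_le; lra]). lra. Qed.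

Lemma Good_all m f eps B : 0 < eps -> (forall p, pt m p -> contAt m f p) -> (forall i, fst B i <= snd B i) -> Good m f eps B.
Proof. intros He Hc H0. apply NNPP. intros Hbad.
  set (lo := fun j i => fst (boxes m f eps j B) i). set (hi := fun j i => snd (boxes m f eps j B) i).
  assert (Hcs : forall i, {c | (i < m)%nat -> forall j, lo j i <= c <= hi j i}).
  { intros i. destruct (lt_dec i m) as [Hi|Hi].
    - destruct (completeness (fun x => exists j, x = lo j i)) as [c [U L]].
      + exists (hi O i). intros x [j ->]. apply boxes_le; auto.
      + exists (lo O i). exists O. auto.
      + exists c. intros _ j. split. apply U. exists j; auto. apply L. intros x [j' ->]. apply boxes_le; auto.
    - exists 0. intros; lia. }
  set (c := fun i => if lt_dec i m then proj1_sig (Hcs i) else 0).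
  assert (Hc1 : forall i, (i < m)%nat -> forall j, lo j i <= c i <= hi j i).
  { intros i Hi j. unfold c. destruct (lt_dec i m); [|lia]. apply (proj2_sig (Hcs i)); auto. }
  assert (ptc : pt m c). { intros i Hi. unfold c. destruct (lt_dec i m); auto; lia. }
  destruct (Hc c ptc (eps / 2) ltac:(lra)) as [eta [Heta Hn]].
  set (W := fsum m (fun i => snd B i - fst B i) + 1).
  assert (HW : 0 < W). { unfold W. assert (0 <= fsum m (fun i => snd B i - fst B i)) by (apply fsum_ge0; intros i _; specialize (H0 i); lra). lra. }
  destruct (pow_lt_1_zero (/2) ltac:(rewrite Rabs_right; lra) (eta / 2 / W) ltac:(apply Rdiv_lt_0_compat; lra)) as [J HJ].
  specialize (HJ J (le_n J)). rewrite Rabs_right in HJ by (apply Rle_ge, pow_le; lra).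
  apply (boxes_bad m f eps B J Hbad). exists (eta / 2). split. lra.
  intros p q Hp Hq Hb Hd.
  assert (Hpc : forall i, (i < m)%nat -> Rabs (p i - c i) < eta / 2).
  { intros i Hi. destruct (boxes_prop m f eps B i J Hi (H0 i)) as [Wd _]. specialize (Hb i Hi). specialize (Hc1 i Hi J).
    unfold lo, hi in Hc1. 
    assert (snd B i - fst B i <= W). { unfold W. assert (snd B i - fst B i <= fsum m (fun i => snd B i - fst B i)).
      { apply (fsum_term_le m (fun i => snd B i - fst B i)). intros i' _; specialize (H0 i'); lra. auto. } lra. }
    assert ((snd B i - fst B i) * (/ 2) ^ J <= W * (/2) ^ J) by (apply Rmult_le_compat_r; [apply pow_le; lra| lra]).
    assert (W * (/2) ^ J < eta / 2). { apply (Rmult_lt_reg_l (/ W)). apply Rinv_0_lt_compat; lra.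
      rewrite <- Rmult_assoc, Rinv_l, Rmult_1_l by lra. replace (/ W * (eta / 2)) with (eta / 2 / W) by (field; lra). auto. }
    apply Rabs_def1; lra. }
  assert (A1 : Rabs (f p - f c) < eps / 2). { apply Hn; auto. intros i Hi; specialize (Hpc i Hi); lra. }
  assert (A2 : Rabs (f q - f c) < eps / 2). { apply Hn; auto. intros i Hi. specialize (Hd i Hi). specialize (Hpc i Hi).
    replace (q i - c i) with ((q i - p i) + (p i - c i)) by ring. eapply Rle_lt_trans. apply Rabs_triang. lra. }
  replace (f q - f p) with ((f q - f c) + - (f p - f c)) by ring. eapply Rle_lt_trans. apply Rabs_triang. rewrite Rabs_Ropp. lra. Qed.

Lemma heine m f L : (forall p, pt m p -> contAt m f p) ->
  (forall p, pt m p -> f p <> 0 -> forall i, (i < m)%nat -> Rabs (p i) <= L) ->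
  forall eps, 0 < eps -> exists del, 0 < del /\ forall p q, pt m p -> pt m q ->
    (forall i, (i < m)%nat -> Rabs (q i - p i) < del) -> Rabs (f q - f p) < eps.
Proof. intros Hc Hs eps He.
  destruct (Good_all m f eps (fun _ => - Rabs L, fun _ => Rabs L) He Hc) as [del [Hd G]].
  { intros i; simpl. generalize (Rabs_pos L); lra. }
  exists del. split; auto. intros p q Hp Hq Hpq.
  assert (inb : forall r, pt m r -> f r <> 0 -> forall i, (i < m)%nat -> fst (fun _ : nat => - Rabs L, fun _ : nat => Rabs L) i <= r i <= snd (fun _ : nat => - Rabs L, fun _ : nat => Rabs L) i).
  { intros r Hr Hne i Hi. simpl. specialize (Hs r Hr Hne i Hi). generalize (Rle_abs L). apply abs_between in Hs. lra. }
  destruct (Req_dec (f p) 0) as [E|E].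
  - destruct (Req_dec (f q) 0) as [E'|E']. rewrite E, E', Rminus_diag, Rabs_R0; auto.
    rewrite <- Rabs_Ropp. replace (- (f q - f p)) with (f p - f q) by ring. apply G; auto.
    intros i Hi. rewrite <- Rabs_Ropp. replace (- (p i - q i)) with (q i - p i) by ring. auto.
  - apply G; auto. Qed.

Definition Sf (m : nat) (nu : nat -> R) (d : R) (p : nat -> R) := inner m p nu - d.
Definition Gf m nu d (u : (nat -> R) -> R) p := u p * u p * / (2 * Sf m nu d p).
Definition gk m nu d (u : (nat -> R) -> R) (Du : nat -> (nat -> R) -> R) k p :=
  u p * Du k p * / Sf m nu d p - u p * u p * nu k * / (2 * (Sf m nu d p * Sf m nu d p)).

Lemma s_lip m nu d p q : (forall i, (i < m)%nat -> Rabs (nu i) <= 1) ->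
  Rabs (Sf m nu d q - Sf m nu d p) <= fsum m (fun i => Rabs (q i - p i)).
Proof. intros H. unfold Sf, inner. replace (fsum m (fun i => q i * nu i) - d - (fsum m (fun i => p i * nu i) - d))
  with (fsum m (fun i => q i * nu i - p i * nu i)) by (rewrite fsum_minus; ring).
  rewrite (fsum_ext m _ (fun i => (q i - p i) * nu i)) by (intros; ring).
  eapply Rle_trans. apply fsum_abs. apply fsum_le. intros i Hi. rewrite Rabs_mult.
  specialize (H i Hi). assert (0 <= Rabs (q i - p i)) by apply Rabs_pos. nra. Qed.

Lemma near_small m p (eps : R) : 0 < eps -> near m p (fun q => fsum m (fun i => Rabs (q i - p i)) < eps).
Proof. intros He. exists (eps / (INR m + 1)). split. apply Rdiv_lt_0_compat. lra. generalize (pos_INR m); lra.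
  intros q Hq Hd. assert (0 <= INR m) by apply pos_INR.
  assert (fsum m (fun i => Rabs (q i - p i)) <= INR m * (eps / (INR m + 1))).
  { apply fsum_bound. intros i Hi. left. auto. }
  assert (INR m * (eps / (INR m + 1)) < eps).
  { replace (INR m * (eps / (INR m + 1))) with (eps * (INR m / (INR m + 1))) by (field; lra).
    assert (INR m / (INR m + 1) < 1). { apply (Rmult_lt_reg_r (INR m + 1)). lra. unfold Rdiv. rewrite Rmult_assoc, Rinv_l by lra. lra. }
    nra. } lra. Qed.

Lemma Sf_cont m nu d p : (forall i, (i < m)%nat -> Rabs (nu i) <= 1) -> contAt m (Sf m nu d) p.
Proof. intros H eps He. eapply near_impl. 2: apply (near_small m p eps He). intros q _ A.
  generalize (s_lip m nu d p q H). lra. Qed.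

Lemma u_zero m nu d u delta p : 0 < delta ->
  (forall p, pt m p -> u p <> 0 -> inner m p nu >= d + delta) -> pt m p -> Sf m nu d p < delta -> u p = 0.
Proof. intros Hd Hs Hp H. destruct (Req_dec (u p) 0); auto. specialize (Hs p Hp H0). unfold Sf in H. lra. Qed.

Lemma gk_cont m nu d u Du delta k p : 0 < delta -> (forall i, (i < m)%nat -> Rabs (nu i) <= 1) ->
  (forall p, pt m p -> u p <> 0 -> inner m p nu >= d + delta) ->
  (forall p, pt m p -> contAt m u p) -> (forall p, pt m p -> contAt m (Du k) p) ->
  pt m p -> contAt m (gk m nu d u Du k) p.
Proof. intros Hd Hnu Hs Hu HDu Hp. destruct (Rlt_dec 0 (Sf m nu d p)) as [Sp|Sp].
  - unfold gk. apply contAt_minus. apply contAt_mult. apply contAt_mult; auto.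
    apply contAt_inv. lra. apply Sf_cont; auto.
    apply contAt_mult. apply contAt_mult. apply contAt_mult; auto. apply contAt_const.
    apply contAt_inv. apply Rgt_not_eq. nra. apply contAt_mult. apply contAt_const. apply contAt_mult; apply Sf_cont; auto.
  - assert (up : u p = 0) by (apply (u_zero m nu d u delta); auto; lra).
    intros eps He. eapply near_impl. 2: apply (near_small m p delta Hd). intros q Hq A.
    assert (uq : u q = 0). { apply (u_zero m nu d u delta); auto. generalize (s_lip m nu d p q Hnu). apply Rnot_lt_le in Sp.
      intro B. assert (B2 : Rabs (Sf m nu d q - Sf m nu d p) < delta) by lra. apply Rabs_def2 in B2. lra. }
    unfold gk. rewrite up, uq. replace (0 * Du k q * / Sf m nu d q - 0 * 0 * nu k * / (2 * (Sf m nu d q * Sf m nu d q)) -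
      (0 * Du k p * / Sf m nu d p - 0 * 0 * nu k * / (2 * (Sf m nu d p * Sf m nu d p)))) with 0 by ring.
    rewrite Rabs_R0; auto. Qed.

Lemma dlim_eq f x l1 l2 : derivable_pt_lim f x l1 -> l1 = l2 -> derivable_pt_lim f x l2.
Proof. intros H ->; auto. Qed.

Lemma dquot U S y lu ls : derivable_pt_lim U y lu -> derivable_pt_lim S y ls -> S y <> 0 ->
  derivable_pt_lim (fun z => U z * U z * / (2 * S z)) y (((lu * U y + U y * lu) * (2 * S y) - 2 * ls * (U y * U y)) / (2 * S y) ^ 2).
Proof. intros HU HS Hne.
  assert (H := derivable_pt_lim_div (mult_fct U U) (mult_real_fct 2 S) y _ _ (derivable_pt_lim_mult U U y lu lu HU HU)
    (derivable_pt_lim_scal S 2 y ls HS)).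
  unfold div_fct, mult_fct, mult_real_fct in H. unfold Rsqr in H. simpl.
  replace ((2 * S y) * ((2 * S y) * 1)) with ((2 * S y) * (2 * S y)) by ring. apply H. apply Rmult_integral_contrapositive. split; lra. Qed.

Lemma Gf_deriv m nu d u Du delta k p y : (k < m)%nat -> 0 < delta -> (forall i, (i < m)%nat -> Rabs (nu i) <= 1) ->
  (forall p, pt m p -> u p <> 0 -> inner m p nu >= d + delta) ->
  is_partial m u k (Du k) -> pt m p ->
  derivable_pt_lim (fun y => Gf m nu d u (upd p k y)) y (gk m nu d u Du k (upd p k y)).
Proof. intros Hk Hd Hnu Hs HP Hp. set (q := upd p k y). assert (Hq : pt m q) by (apply pt_upd; auto).
  assert (SE : forall z, Sf m nu d (upd p k z) = Sf m nu d q + (z - y) * nu k).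
  { intros z. unfold q, Sf. rewrite !inner_upd by auto. ring. }
  destruct (Rlt_dec 0 (Sf m nu d q)) as [Sp|Sp].
  - assert (HU : derivable_pt_lim (fun z => u (upd p k z)) y (Du k q)).
    { specialize (HP q Hq). assert (Eq : q k = y) by (unfold q; apply upd_same). rewrite Eq in HP.
      replace (fun s => u (upd q k s)) with (fun z => u (upd p k z)) in HP. exact HP.
      apply functional_extensionality; intros; unfold q; rewrite upd_upd; auto. }
    assert (HS : derivable_pt_lim (fun z => Sf m nu d (upd p k z)) y (nu k)).
    { replace (fun z => Sf m nu d (upd p k z)) with (fun z => (Sf m nu d q - y * nu k) + nu k * z).
      2:{ apply functional_extensionality; intros z; rewrite SE; ring. }
      apply (dlim_eq _ _ (0 + nu k * 1)). apply (derivable_pt_lim_plus (fct_cte (Sf m nu d q - y * nu k)) (mult_real_fct (nu k) id)).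
      apply derivable_pt_lim_const. apply derivable_pt_lim_scal. apply derivable_pt_lim_id. ring. }
    unfold Gf. eapply dlim_eq. apply (dquot (fun z => u (upd p k z)) (fun z => Sf m nu d (upd p k z)) y _ _ HU HS).
    fold q. lra. fold q. unfold gk. field. lra.
  - assert (uq : u q = 0) by (apply (u_zero m nu d u delta); auto; lra).
    intros eps He. exists (mkposreal delta Hd). intros h Hh0 Hh. simpl in Hh.
    assert (Hsm : Sf m nu d (upd p k (y + h)) < delta).
    { rewrite SE. specialize (Hnu k Hk). replace (y + h - y) with h by ring.
      assert (Rabs (h * nu k) <= Rabs h). { rewrite Rabs_mult. rewrite <- (Rmult_1_r (Rabs h)) at 2. apply Rmult_le_compat_l; [apply Rabs_pos | auto]. }
      apply Rnot_lt_le in Sp. generalize (Rle_abs (h * nu k)). lra. }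
    assert (H : u (upd p k (y + h)) = 0).
    { apply (u_zero m nu d u delta _ Hd Hs). apply pt_upd; auto. exact Hsm. }
    unfold Gf, gk. fold q. rewrite H, uq. replace ((0 * 0 * / (2 * Sf m nu d (upd p k (y + h))) - 0 * 0 * / (2 * Sf m nu d q)) / h -
      (0 * Du k q * / Sf m nu d q - 0 * 0 * nu k * / (2 * (Sf m nu d q * Sf m nu d q)))) with 0 by (unfold Rdiv; ring).
    rewrite Rabs_R0; auto. Qed.

Lemma nat_big r : exists N, r < INR N.
Proof. destruct (archimed r) as [H _]. destruct (Z_lt_le_dec 0 (up r)) as [l|l].
  exists (Z.to_nat (up r)). rewrite INR_IZR_INZ, Z2Nat.id by lia. lra.
  exists 0%nat. simpl. apply IZR_le in l. lra. Qed.

Lemma zero_lemma m nu d u Du K delta k b Bb :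
  (k < m)%nat -> 0 < delta -> 0 <= K -> (forall i, (i < m)%nat -> Rabs (nu i) <= 1) ->
  (forall p, pt m p -> u p <> 0 -> (forall i, (i < m)%nat -> Rabs (p i) <= K) /\ inner m p nu >= d + delta) ->
  is_partial m u k (Du k) ->
  (forall p, pt m p -> contAt m u p) -> (forall p, pt m p -> contAt m (Du k) p) ->
  (forall p x, b (upd p k x) = b p) ->
  0 <= Bb -> (forall p, pt m p -> (forall i, (i < m)%nat -> Rabs (p i) <= K + 1) -> Rabs (b p) <= Bb) ->
  forall eps, 0 < eps -> exists N0, forall N, (N >= N0)%nat ->
    Rabs (riemann_sum m N (fun p => b p * gk m nu d u Du k p)) < eps.
Proof. intros Hk Hd HK Hnu Hsupp HP Hu HDu Hb HBb Hbb eps He.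
  assert (Hs : forall p, pt m p -> u p <> 0 -> inner m p nu >= d + delta) by (intros; apply Hsupp; auto).
  assert (gk0 : forall p, u p = 0 -> gk m nu d u Du k p = 0) by (intros p E; unfold gk; rewrite E; ring).
  assert (Gf0 : forall p, u p = 0 -> Gf m nu d u p = 0) by (intros p E; unfold Gf; rewrite E; ring).
  set (C := Bb * (2 * (K + 1) + 1) ^ m).
  assert (HC : 0 <= C) by (unfold C; apply Rmult_le_pos; auto; apply pow_le; lra).
  set (eps' := eps / (C + 1)). assert (He' : 0 < eps') by (apply Rdiv_lt_0_compat; lra).
  destruct (heine m (gk m nu d u Du k) K) with (eps := eps') as [del [Hdel Hunif]]; auto.
  { intros p Hp. apply (gk_cont m nu d u Du delta); auto. }
  { intros p Hp Hne. apply (proj1 (Hsupp p Hp (fun E => Hne (gk0 p E)))). }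
  destruct (nat_big (K + 1 + / del)) as [N0 HN0].
  assert (0 < / del) by (apply Rinv_0_lt_compat; auto).
  exists N0. intros N HN. assert (HNN : INR N0 <= INR N) by (apply le_INR; auto).
  assert (Npos : (0 < N)%nat). { destruct N. simpl in HNN. lra. lia. }
  assert (HNr : 0 < INR N) by (apply lt_0_INR; auto).
  set (h := / INR N).
  assert (Hh0 : 0 < h) by (apply Rinv_0_lt_compat; auto).
  assert (Hhd : h < del). { unfold h. apply (Rmult_lt_reg_l (INR N)); auto. rewrite Rinv_r by lra.
    apply (Rmult_lt_reg_r (/ del)); auto. rewrite Rmult_1_l, Rmult_assoc, Rinv_r, Rmult_1_r by lra. lra. }
  assert (Hh1 : h <= 1). { unfold h. assert (1 <= INR N) by lra. rewrite <- Rinv_1. apply Rinv_le_contravar; lra. }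
  set (err := fun p => b p * gk m nu d u Du k p - INR N * (b p * Gf m nu d u (upd p k (p k + h)) - b p * Gf m nu d u p)).
  assert (Eq : riemann_sum m N (fun p => b p * gk m nu d u Du k p) = riemann_sum m N err).
  { unfold riemann_sum. f_equal. unfold err. rewrite gridsum_minus, gridsum_scal, gridsum_minus.
    assert (SH := gridsum_shift m N K (fun p => b p * Gf m nu d u p) k Npos ltac:(lra) Hk).
    simpl in SH. rewrite (gridsum_ext m N (fun p => b p * Gf m nu d u (upd p k (p k + h))) (fun p => b (upd p k (p k + / INR N)) * Gf m nu d u (upd p k (p k + / INR N)))).
    rewrite SH. ring.
    - intros p Hp Hpk. rewrite Gf0. ring. destruct (Req_dec (u p) 0) as [E|E]; auto. exfalso. destruct (Hsupp p Hp E) as [A _].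
      specialize (A k Hk). lra.
    - intros p Hp. rewrite Hb. auto. }
  rewrite Eq. eapply Rle_lt_trans. apply (riemann_count m N (K + 1) err (Bb * eps')); auto. lra.
  apply Rmult_le_pos; lra.
  3: { replace (Bb * eps' * (2 * (K + 1) + 1) ^ m) with (eps' * C) by (unfold C; ring).
       unfold eps'. replace (eps / (C + 1) * C) with (eps * (C / (C + 1))) by (field; lra).
       assert (C / (C + 1) < 1). { apply (Rmult_lt_reg_r (C + 1)). lra. unfold Rdiv. rewrite Rmult_assoc, Rinv_l by lra. lra. }
       nra. }
  -
    assert (Hbox : forall p, pt m p -> err p <> 0 -> forall i, (i < m)%nat -> Rabs (p i) <= K + 1).
    { intros p Hp Hne i Hi. destruct (Req_dec (u p) 0) as [E|E].
      - destruct (Req_dec (u (upd p k (p k + h))) 0) as [E'|E'].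
        + exfalso. apply Hne. unfold err. rewrite gk0, !Gf0 by auto. ring.
        + destruct (Hsupp _ (pt_upd m p k _ Hp Hk) E') as [A _]. specialize (A i Hi).
          destruct (Nat.eq_dec i k). subst i. rewrite upd_same in A. apply abs_between in A. apply Rabs_le. lra.
          rewrite upd_other in A by auto. lra.
      - destruct (Hsupp _ Hp E) as [A _]. specialize (A i Hi). lra. }
    intros p Hp. destruct (classic (forall i, (i < m)%nat -> Rabs (p i) <= K + 1)) as [Inb|Outb].
    + destruct (MVT_cor2 (fun y => Gf m nu d u (upd p k y)) (fun y => gk m nu d u Du k (upd p k y)) (p k) (p k + h))
        as [xi [Exi Hxi]]. lra.
      { intros c _. apply (Gf_deriv m nu d u Du delta); auto. }
      rewrite upd_self in Exi. replace (p k + h - p k) with h in Exi by ring.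
      replace (err p) with (b p * (gk m nu d u Du k p - gk m nu d u Du k (upd p k xi))).
      2:{ unfold err. replace (b p * Gf m nu d u (upd p k (p k + h)) - b p * Gf m nu d u p) with
            (b p * (Gf m nu d u (upd p k (p k + h)) - Gf m nu d u p)) by ring. rewrite Exi. unfold h; field; lra. }
      rewrite Rabs_mult. apply Rmult_le_compat; try apply Rabs_pos. apply Hbb; auto.
      rewrite <- Rabs_Ropp. replace (- (gk m nu d u Du k p - gk m nu d u Du k (upd p k xi))) with
        (gk m nu d u Du k (upd p k xi) - gk m nu d u Du k p) by ring. left. apply Hunif; auto. apply pt_upd; auto.
      intros i Hi. destruct (Nat.eq_dec i k). subst i. rewrite upd_same. rewrite Rabs_right; lra.
      rewrite upd_other by auto. rewrite Rminus_diag, Rabs_R0; lra.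
    + destruct (Req_dec (err p) 0) as [E|E]. rewrite E, Rabs_R0. apply Rmult_le_pos; lra.
      exfalso. apply Outb. apply Hbox; auto.
  - intros p Hp Hne i Hi. destruct (Req_dec (u p) 0) as [E|E].
    + destruct (Req_dec (u (upd p k (p k + h))) 0) as [E'|E'].
      * exfalso. apply Hne. unfold err. rewrite gk0, !Gf0 by auto. ring.
      * destruct (Hsupp _ (pt_upd m p k _ Hp Hk) E') as [A _]. specialize (A i Hi).
        destruct (Nat.eq_dec i k). subst i. rewrite upd_same in A. apply abs_between in A. apply Rabs_le. lra.
        rewrite upd_other in A by auto. lra.
    + destruct (Hsupp _ Hp E) as [A _]. specialize (A i Hi). lra.
Qed.

Lemma eventually_all (K0 : nat) (P : nat -> nat -> Prop) :
  (forall k, (k < K0)%nat -> exists N0, forall N, (N >= N0)%nat -> P k N) ->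
  exists N0, forall N, (N >= N0)%nat -> forall k, (k < K0)%nat -> P k N.
Proof. induction K0; intros H. exists O. intros; lia.
  destruct IHK0 as [N1 H1]. intros; apply H; lia. destruct (H K0 ltac:(lia)) as [N2 H2].
  exists (max N1 N2). intros N HN k Hk. destruct (Nat.eq_dec k K0). subst. apply H2; lia. apply H1; lia. Qed.

Lemma cs2 n (al be X Y : nat -> R) : fsum n (fun i => al i ^ 2 + be i ^ 2) = 1 ->
  (fsum n (fun i => al i * X i + be i * Y i)) ^ 2 <= fsum n (fun i => X i ^ 2 + Y i ^ 2).
Proof. intros H. set (t := fsum n (fun i => al i * X i + be i * Y i)).
  assert (0 <= fsum n (fun i => (X i - t * al i) ^ 2 + (Y i - t * be i) ^ 2)).
  { apply fsum_ge0. intros. apply Rplus_le_le_0_compat; apply pow2_ge_0. }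
  rewrite (fsum_ext n _ (fun i => ((X i ^ 2 + Y i ^ 2) - (2 * t) * (al i * X i + be i * Y i)) + (t * t) * (al i ^ 2 + be i ^ 2))) in H0
    by (intros; ring).
  rewrite fsum_plus, fsum_minus, !fsum_scal, H in H0. fold t in H0. nra. Qed.

Lemma cs1 m (a v : nat -> R) : fsum m (fun i => v i ^ 2) = 1 ->
  fsum m (fun i => a i * v i) <= sqrt (fsum m (fun i => a i ^ 2)).
Proof. intros H. set (t := fsum m (fun i => a i * v i)).
  assert (0 <= fsum m (fun i => (a i - t * v i) ^ 2)) by (apply fsum_ge0; intros; apply pow2_ge_0).
  rewrite (fsum_ext m _ (fun i => a i ^ 2 - (2 * t) * (a i * v i) + (t * t) * (v i ^ 2))) in H0 by (intros; ring).
  rewrite fsum_plus, fsum_minus, !fsum_scal, H in H0. fold t in H0.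
  eapply Rle_trans. apply Rle_abs. rewrite <- sqrt_Rsqr_abs. apply sqrt_le_1_alt. unfold Rsqr. nra. Qed.

Lemma abs_le1 x : x ^ 2 <= 1 -> Rabs x <= 1.
Proof. intros H. unfold Rabs; destruct Rcase_abs; nra. Qed.

Lemma fsum_2n1 n f : fsum (2 * n + 1) f = fsum n f + fsum n (fun i => f (n + i)%nat) + f (2 * n)%nat.
Proof. replace (2 * n + 1)%nat with (S (n + n)) by lia. simpl fsum. rewrite fsum_add. replace (n + n)%nat with (2 * n)%nat by lia. auto. Qed.

Definition cc n (nu : nat -> R) (p : nat -> R) := fsum n (fun i => nu i * p (n + i)%nat - nu (n + i)%nat * p i).
Definition aa n nu k p := if Nat.eqb k (2 * n) then 2 * cc n nu p else nu k.

Lemma aa_inv n nu k p x : (k < 2 * n + 1)%nat -> aa n nu k (upd p k x) = aa n nu k p.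
Proof. intros Hk. unfold aa. destruct (Nat.eqb_spec k (2 * n)); auto. subst. f_equal. unfold cc.
  apply fsum_ext. intros i Hi. rewrite !upd_other by lia. auto. Qed.

Lemma aa_bound n nu L : 0 <= L -> (forall i, (i < 2 * n + 1)%nat -> Rabs (nu i) <= 1) ->
  forall k p, (k < 2 * n + 1)%nat -> (forall i, (i < 2 * n + 1)%nat -> Rabs (p i) <= L) ->
  Rabs (aa n nu k p) <= 1 + 2 * (INR n * (2 * L)).
Proof. intros HL Hnu k p Hk Hp. assert (0 <= INR n) by apply pos_INR. unfold aa. destruct (Nat.eqb_spec k (2 * n)).
  - rewrite Rabs_mult, (Rabs_right 2) by lra. unfold cc. cut (Rabs (fsum n (fun i => nu i * p (n + i)%nat - nu (n + i)%nat * p i)) <= INR n * (2 * L)). lra.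
    eapply Rle_trans. apply fsum_abs. apply fsum_bound. intros i Hi.
    unfold Rminus. eapply Rle_trans. apply Rabs_triang. rewrite Rabs_Ropp, !Rabs_mult.
    assert (A1 := Hnu i ltac:(lia)). assert (A2 := Hnu (n + i)%nat ltac:(lia)).
    assert (B1 := Hp i ltac:(lia)). assert (B2 := Hp (n + i)%nat ltac:(lia)).
    assert (0 <= Rabs (nu i)) by apply Rabs_pos. assert (0 <= Rabs (nu (n + i)%nat)) by apply Rabs_pos.
    assert (0 <= Rabs (p i)) by apply Rabs_pos. assert (0 <= Rabs (p (n + i)%nat)) by apply Rabs_pos. nra.
  - specialize (Hnu k Hk). nra. Qed.

Lemma pointwise n nu d u Du w delta p :
  fsum (2 * n + 1) (fun i => nu i ^ 2) = 1 -> nu (2 * n)%nat = 0 -> 0 < delta ->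
  (forall p, pt (2 * n + 1) p -> u p <> 0 -> inner (2 * n + 1) p nu >= d + delta) ->
  (forall p, pt (2 * n + 1) p -> inner (2 * n + 1) p nu > d ->
      is_inf (fun r => exists q, pt (2 * n + 1) q /\ inner (2 * n + 1) q nu = d /\
                                 r = eucl_dist (2 * n + 1) p q) (w p)) ->
  pt (2 * n + 1) p ->
  fsum (2 * n + 1) (fun k => aa n nu k p * gk (2 * n + 1) nu d u Du k p) + / 4 * (u p ^ 2 / w p ^ 2) <= gradH2 n Du p.
Proof. intros H1 Ht Hd Hs Hw Hp. set (m := (2 * n + 1)%nat).
  set (A := fsum m (fun k => aa n nu k p * Du k p)).
  assert (HA : A ^ 2 <= gradH2 n Du p).
  { assert (E : A = fsum n (fun i => nu i * Xfield n Du i p + nu (n + i)%nat * Yfield n Du i p)).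
    { unfold A, m. rewrite fsum_2n1. unfold aa at 3. rewrite Nat.eqb_refl.
      rewrite (fsum_ext n (fun i => aa n nu i p * Du i p) (fun i => nu i * Du i p)).
      2:{ intros i Hi. unfold aa. destruct (Nat.eqb_spec i (2 * n)); [lia|auto]. }
      rewrite (fsum_ext n (fun i => aa n nu (n + i)%nat p * Du (n + i)%nat p) (fun i => nu (n + i)%nat * Du (n + i)%nat p)).
      2:{ intros i Hi. unfold aa. destruct (Nat.eqb_spec (n + i)%nat (2 * n)); [lia|auto]. }
      rewrite (fsum_ext n (fun i => nu i * Xfield n Du i p + nu (n + i)%nat * Yfield n Du i p) (fun i => (nu i * Du i p + nu (n + i)%nat * Du (n + i)%nat p) + (2 * Du (2 * n)%nat p) * (nu i * p (n + i)%nat - nu (n + i)%nat * p i))).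
      2:{ intros; unfold Xfield, Yfield; ring. }
      rewrite fsum_plus, fsum_plus, fsum_scal. unfold cc. ring. }
    rewrite E. unfold gradH2. apply cs2.
    rewrite fsum_2n1, Ht in H1. rewrite fsum_plus. lra. }
  assert (P2 : fsum m (fun k => aa n nu k p * nu k) = 1).
  { rewrite <- H1. apply fsum_ext. intros k Hk. unfold aa. destruct (Nat.eqb_spec k (2 * n)). subst; rewrite Ht; ring. ring. }
  assert (EG : fsum m (fun k => aa n nu k p * gk m nu d u Du k p) =
     (u p * / Sf m nu d p) * A - (u p * u p * / (2 * (Sf m nu d p * Sf m nu d p))) * fsum m (fun k => aa n nu k p * nu k)).
  { unfold A. rewrite <- !fsum_scal, <- fsum_minus. apply fsum_ext. intros; unfold gk; ring. }
  rewrite P2 in EG. fold m. rewrite EG.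
  destruct (Req_dec (u p) 0) as [E|E].
  - rewrite E. replace (0 * / Sf m nu d p * A - 0 * 0 * / (2 * (Sf m nu d p * Sf m nu d p)) * 1 + / 4 * (0 ^ 2 / w p ^ 2)) with 0
      by (unfold Rdiv; ring). assert (0 <= A ^ 2) by apply pow2_ge_0. lra.
  - assert (HS := Hs p Hp E). set (S := Sf m nu d p). assert (HSd : delta <= S) by (unfold S, Sf; fold m in HS; lra).
    assert (HwS : S <= w p).
    { destruct (Hw p Hp ltac:(lra)) as [_ G]. apply G. intros x [q [Hq [Hqd ->]]].
      unfold S, Sf, eucl_dist. replace (inner m p nu - d) with (fsum m (fun i => (p i - q i) * nu i)).
      apply cs1. auto. unfold inner in *. rewrite <- Hqd. rewrite <- fsum_minus. apply fsum_ext; intros; ring. }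
    assert (0 < S) by lra.
    assert (u p ^ 2 / w p ^ 2 <= u p ^ 2 / S ^ 2).
    { unfold Rdiv. apply Rmult_le_compat_l. apply pow2_ge_0. apply Rinv_le_contravar. apply pow_lt; lra. apply pow_incr; lra. }
    assert (0 <= (A - u p / (2 * S)) ^ 2) by apply pow2_ge_0.
    assert (u p * / S * A - u p * u p * / (2 * (S * S)) * 1 + / 4 * (u p ^ 2 / S ^ 2) = A ^ 2 - (A - u p / (2 * S)) ^ 2)
      by (field; lra).
    lra. Qed.

Theorem mainTheorem3 (n : nat) (nu : nat -> R) (d : R)
  (u : (nat -> R) -> R) (Du : nat -> (nat -> R) -> R) (w : (nat -> R) -> R)
  (I1 I2 : R) :
  (* nu in S^{2n} with nu_t = 0 *)
  fsum (2 * n + 1) (fun i => nu i ^ 2) = 1 ->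
  nu (2 * n)%nat = 0 ->
  (* u in C_0^infty(Pi^+_{nu,d}) (extended by zero to R^{2n+1}) *)
  smooth (2 * n + 1) u ->
  (exists K delta, 0 < delta /\ forall p, pt (2 * n + 1) p -> u p <> 0 ->
      (forall i, (i < 2 * n + 1)%nat -> Rabs (p i) <= K) /\
      inner (2 * n + 1) p nu >= d + delta) ->
  (* Du i is the i-th partial derivative of u *)
  (forall i, (i < 2 * n + 1)%nat -> is_partial (2 * n + 1) u i (Du i)) ->
  (* w p = dist(p, boundary of Pi^+) for p in Pi^+ *)
  (forall p, pt (2 * n + 1) p -> inner (2 * n + 1) p nu > d ->
      is_inf (fun r => exists q, pt (2 * n + 1) q /\ inner (2 * n + 1) q nu = d /\
                                 r = eucl_dist (2 * n + 1) p q) (w p)) ->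
  integral_is (2 * n + 1) (gradH2 n Du) I1 ->
  integral_is (2 * n + 1) (fun p => u p ^ 2 / w p ^ 2) I2 ->
  I1 >= / 4 * I2.
Proof.
  intros H1 Ht Hsm [K0 [delta [Hd Hsup]]] Hpart Hw HI1 HI2.
  set (m := (2 * n + 1)%nat) in *.
  set (K := Rabs K0). assert (HK : 0 <= K) by apply Rabs_pos.
  assert (Hsupp : forall p, pt m p -> u p <> 0 -> (forall i, (i < m)%nat -> Rabs (p i) <= K) /\ inner m p nu >= d + delta).
  { intros p Hp E. destruct (Hsup p Hp E) as [A B]. split; auto. intros i Hi. specialize (A i Hi). generalize (Rle_abs K0). unfold K; lra. }
  assert (Hs : forall p, pt m p -> u p <> 0 -> inner m p nu >= d + delta) by (intros; apply Hsupp; auto).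
  assert (Hnu : forall i, (i < m)%nat -> Rabs (nu i) <= 1).
  { intros i Hi. apply abs_le1. rewrite <- H1. apply (fsum_term_le m (fun i => nu i ^ 2)); auto. intros; apply pow2_ge_0. }
  destruct Hsm as [Hcu Hder].
  assert (Hu : forall p, pt m p -> contAt m u p) by (intros p Hp; exact (Hcu p Hp)).
  assert (HDu : forall k, (k < m)%nat -> forall p, pt m p -> contAt m (Du k) p).
  { intros k Hk p Hp. destruct (Hder k Hk) as [df [Hdf Hsdf]]. destruct Hsdf as [Hcdf _].
    apply (contAt_ext m df); auto. intros q Hq. apply (uniqueness_limite _ _ _ _ (Hdf q Hq) (Hpart k Hk q Hq)).
    exact (Hcdf p Hp). }
  set (Bb := 1 + 2 * (INR n * (2 * (K + 1)))).
  assert (HBb : 0 <= Bb) by (unfold Bb; assert (0 <= INR n) by apply pos_INR; nra).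
  set (E := fun N => fsum m (fun k => riemann_sum m N (fun p => aa n nu k p * gk m nu d u Du k p))).
  assert (HE : forall eps, 0 < eps -> exists N0, forall N, (N >= N0)%nat -> Rabs (E N) < eps).
  { intros eps He. assert (0 <= INR m) by apply pos_INR.
    destruct (eventually_all m (fun k N => Rabs (riemann_sum m N (fun p => aa n nu k p * gk m nu d u Du k p)) < eps / (INR m + 1))) as [N0 HN0].
    { intros k Hk. apply (zero_lemma m nu d u Du K delta k (aa n nu k) Bb); auto.
      - intros p x. apply aa_inv; auto.
      - intros p Hp Hb. apply aa_bound; auto. lra.
      - apply Rdiv_lt_0_compat; lra. }
    exists N0. intros N HN. unfold E. eapply Rle_lt_trans. apply fsum_abs.
    eapply Rle_lt_trans. apply (fsum_bound m _ (eps / (INR m + 1))). intros k Hk. left. apply HN0; auto.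
    replace (INR m * (eps / (INR m + 1))) with (eps * (INR m / (INR m + 1))) by (field; lra).
    assert (INR m / (INR m + 1) < 1). { apply (Rmult_lt_reg_r (INR m + 1)). lra. unfold Rdiv. rewrite Rmult_assoc, Rinv_l by lra. lra. }
    nra. }
  assert (Hineq : forall N, (1 <= N)%nat -> E N + / 4 * riemann_sum m N (fun p => u p ^ 2 / w p ^ 2) <= riemann_sum m N (gradH2 n Du)).
  { intros N HN. assert (0 < INR N) by (apply lt_0_INR; lia). assert (0 < INR N ^ m) by (apply pow_lt; lra).
    unfold E, riemann_sum.
    rewrite (fsum_ext m _ (fun k => / INR N ^ m * gridsum m N (fun p => aa n nu k p * gk m nu d u Du k p))) by (intros; unfold Rdiv; ring).
    rewrite fsum_scal.
    apply (Rle_trans _ ((gridsum m N (fun p => fsum m (fun k => aa n nu k p * gk m nu d u Du k p) + / 4 * (u p ^ 2 / w p ^ 2))) / INR N ^ m)).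
    - rewrite gridsum_plus, gridsum_scal, gridsum_fsum. unfold Rdiv. right. ring.
    - unfold Rdiv. apply Rmult_le_compat_r. left; apply Rinv_0_lt_compat; lra.
      apply gridsum_le. intros p Hp. apply (pointwise n nu d u Du w delta); auto. }
  apply Rnot_lt_ge. intro Hlt. set (g := (/ 4 * I2 - I1) / 3). assert (Hg : 0 < g) by (unfold g; lra).
  destruct (HI1 g Hg) as [N1 A1]. destruct (HI2 (4 * g) ltac:(lra)) as [N2 A2]. destruct (HE g Hg) as [N3 A3].
  set (N := max 1 (max N1 (max N2 N3))).
  specialize (A1 N ltac:(unfold N; lia)). specialize (A2 N ltac:(unfold N; lia)). specialize (A3 N ltac:(unfold N; lia)).
  specialize (Hineq N ltac:(unfold N; lia)). unfold R_dist in A1, A2.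
  apply Rabs_def2 in A1. apply Rabs_def2 in A2. apply Rabs_def2 in A3. unfold g in *. lra.
Qed.
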